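(* $\mathsf{SetEquality}\in\mathsf{dAM}[O(\log n)]$. Here, for a fixed constant $c\in\mathbb N$, in $\mathsf{SetEquality}$ each node $u$ of the $n$-node communication graph holds two lists $a_{u,1},\dots,a_{u,\ell}$ and $b_{u,1},\dots,b_{u,\ell}$ with $\ell\le n$ and all $a_{u,i},b_{u,i}\in\{0,1\}^{c\log n}$; the instance is in the language iff the multisets $\mathcal A=\{a_{u,i}:u\in V,i\in[\ell]\}$ and $\mathcal B=\{b_{u,i}:u\in V,i\in[\ell]\}$ are equal (as multisets).
   Context: Distributed interactive proofs (model). An instance consists of a connected communication graph $G=(V,E)$ with $|V|=n$, where each node has a unique identifier of $O(\log n)$ bits, knows $n$, knows its own identifier, its local input (if the problem has local inputs), and the identifiers of its neighbours (with an arbitrary port numbering of its incident edges). A prover, who sees the whole instance, interacts with all nodes in $r$ alternating messages. In a verifier (node) message each node independently samples fresh uniformly random bits and sends them to the prover (public coins). In a prover message the prover sends each node a string. Nodes may additionally exchange the strings they received from the prover with their neighbours in $G$. At the end each node deterministically accepts or rejects as a function of its local information, its own random bits, the strings it received from the prover and those its neighbours received; the instance is accepted iff all nodes accept. The proof size is the maximum number of bits in any single message between the prover and any node. A language $\mathcal L$ (set of instances) is in $\mathsf{dIP}[r,\ell]$ if there is an $r$-message protocol of proof size $\ell=\ell(n)$ such that (completeness) for every instance in $\mathcal L$ some prover makes all nodes accept with probability $>2/3$, and (soundness) for every instance not in $\mathcal L$ and every prover, all nodes accept with probability $<1/3$ (probabilities over the nodes' coins). $\mathsf{dAM}[\ell]$,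 $\mathsf{dMAM}[\ell]$, $\mathsf{dAMAM}[\ell]$, $\mathsf{dMAMAM}[\ell]$ denote the cases of 2, 3, 4, 5 messages, where the letters indicate who sends each message in order (A = nodes send random coins, M = prover). *)

(* Defs.v *)
(* Model of distributed interactive proofs (dAM = 2 messages:
   nodes send public coins, then the prover answers), and SetEquality. *)
From mathcomp Require Import all_boot.
Set Implicit Arguments. Unset Strict Implicit. Unset Printing Implicit Defensive.

(* An instance on n nodes (nodes are 'I_n, an internal naming invisible to
   the nodes).  [adj u] is the list of neighbours of u in port order
   (arbitrary port numbering), [ident u] the identifier of u, [inp u] its
   local input of type I. *)
Record instance (I : Type) (n : nat) := Instance {
  adj : 'I_n -> seq 'I_n;
  ident : 'I_n -> nat;
  inp : 'I_n -> I }.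

Definition edge (I : Type) (n : nat) (G : instance I n) : rel 'I_n :=
  fun u v => v \in adj G u.

(* Well-formedness of the communication graph and identifiers:
   simple undirected connected graph, unique identifiers of O(log n) bits,
   i.e. identifiers below n ^ idc for a fixed model constant idc. *)
Definition wf_instance (idc : nat) (I : Type) (n : nat) (G : instance I n) : Prop :=
  [/\ forall u, uniq (adj G u) /\ u \notin adj G u,
      forall u v, (v \in adj G u) = (u \in adj G v),
      forall u v, connect (edge G) u v,
      injective (ident G) &
      forall u, ident G u < n ^ idc].

(* A dAM protocol: [coins n] random bits per node, proof size [psize n],
   and the deterministic decision of a node, as a function of
   n, own id, own input, neighbours' ids (port order), own random bits,
   own prover string, neighbours' prover strings (port order). *)
Record dAM_protocol (I : Type) := DAMProtocol {
  coins : nat -> nat;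
  psize : nat -> nat;
  decide : nat -> nat -> I -> seq nat -> seq bool -> seq bool -> seq (seq bool) -> bool }.

Definition coin_space (I : Type) (P : dAM_protocol I) (n : nat) : finType :=
  {ffun 'I_n -> (coins P n).-tuple bool}.

Definition prover (I : Type) (P : dAM_protocol I) (n : nat) : Type :=
  coin_space P n -> 'I_n -> seq bool.

Definition prover_ok (I : Type) (P : dAM_protocol I) (n : nat) (M : prover P n) : Prop :=
  forall r u, size (M r u) <= psize P n.

Definition node_accepts (I : Type) (P : dAM_protocol I) (n : nat) (G : instance I n)
    (r : coin_space P n) (m : 'I_n -> seq bool) (u : 'I_n) : bool :=
  decide P n (ident G u) (inp G u) [seq ident G v | v <- adj G u]
         (val (r u)) (m u) [seq m v | v <- adj G u].

Definition all_accept (I : Type) (P : dAM_protocol I) (n : nat) (G : instance I n)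
    (M : prover P n) (r : coin_space P n) : bool :=
  [forall u, node_accepts G r (M r) u].

Definition n_accept (I : Type) (P : dAM_protocol I) (n : nat) (G : instance I n)
    (M : prover P n) : nat :=
  #|[pred r : coin_space P n | all_accept G M r]|.

Definition dAM_decides (I : Type) (wf : forall n, instance I n -> Prop)
    (L : forall n, instance I n -> Prop) (P : dAM_protocol I) : Prop :=
  [/\ forall n, coins P n <= psize P n,
      forall n (G : instance I n), wf n G -> L n G ->
        exists M : prover P n, prover_ok M /\
          2 * #|{: coin_space P n}| < 3 * n_accept G M &
      forall n (G : instance I n), wf n G -> ~ L n G ->
        forall M : prover P n, prover_ok M ->
          3 * n_accept G M < #|{: coin_space P n}| ].

Definition is_O_log (f : nat -> nat) : Prop :=
  exists K N0, forall n, N0 <= n -> f n <= K * trunc_log 2 n.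

Definition in_dAM_log (idc : nat) (I : Type) (wfI : forall n, instance I n -> Prop)
    (L : forall n, instance I n -> Prop) : Prop :=
  exists P : dAM_protocol I,
    dAM_decides (fun n G => wf_instance idc G /\ wfI n G) L P /\ is_O_log (psize P).

Definition SE_input := (seq (seq bool) * seq (seq bool))%type.

Definition wf_SE (c : nat) (n : nat) (G : instance SE_input n) : Prop :=
  exists l, l <= n /\
    forall u, [/\ size (inp G u).1 = l, size (inp G u).2 = l &
                  all (fun s => size s == c * up_log 2 n) ((inp G u).1 ++ (inp G u).2)].

Definition SetEquality (n : nat) (G : instance SE_input n) : Prop :=
  perm_eq (flatten [seq (inp G u).1 | u <- enum 'I_n])
          (flatten [seq (inp G u).2 | u <- enum 'I_n]).

(* Main.v *)
Require Import Defs.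
From mathcomp Require Import all_boot all_order all_algebra all_field.
From mathcomp Require Import zify.
Set Implicit Arguments. Unset Strict Implicit. Unset Printing Implicit Defensive.
Import GRing.Theory.

Fixpoint nat2bits (w x : nat) : seq bool :=
  if w is w'.+1 then odd x :: nat2bits w' x./2 else [::].
Fixpoint bits2nat (s : seq bool) : nat :=
  if s is b :: s' then b + (bits2nat s').*2 else 0.

Lemma size_nat2bits w x : size (nat2bits w x) = w.
Proof. by elim: w x => //= w IH x; rewrite IH. Qed.

Lemma bits2natK w x : x < 2 ^ w -> bits2nat (nat2bits w x) = x.
Proof.
elim: w x => [|w IH] x /=; first by rewrite expn0; case: x.
move=> hx; rewrite IH; first by rewrite -[in RHS](odd_double_half x).
rewrite expnS in hx; rewrite -(odd_double_half x) -muln2 in hx.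
have := hx; case: (odd x) => /= h; lia.
Qed.

Lemma bits2nat_lt s : bits2nat s < 2 ^ size s.
Proof. elim: s => //= b s IH; rewrite expnS -!muln2; case: b => /=; lia. Qed.

Lemma bits2nat_inj s t : size s = size t -> bits2nat s = bits2nat t -> s = t.
Proof.
elim: s t => [|b s IH] [|b' t] //= [hs] h.
have hb : b = b'.
  by move: h; case: b; case: b' => //= h; have := congr1 odd h;
     rewrite /= ?odd_double.
subst b'; congr (_ :: _); apply: IH => //; move: h; rewrite -!muln2; lia.
Qed.

Definition getf (B i : nat) (m : seq bool) := bits2nat (take B (drop (i * B) m)).
Definition enc (B : nat) (xs : seq nat) := flatten [seq nat2bits B x | x <- xs].

Lemma size_enc B xs : size (enc B xs) = size xs * B.
Proof. elim: xs => //= x xs IH; by rewrite /enc /= size_cat size_nat2bits -/(enc B xs) IH mulSn. Qed.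

Lemma getf_enc B xs i : all (fun x => x < 2 ^ B) xs -> i < size xs ->
  getf B i (enc B xs) = nth 0 xs i.
Proof.
elim: xs i => [|x xs IH] [|i] //= /andP[hx hxs] hi.
  by rewrite /getf /enc /= mul0n drop0 take_size_cat ?size_nat2bits // bits2natK.
rewrite -IH //; rewrite /getf /enc /= mulSn drop_cat size_nat2bits.
have -> : (B + i * B < B) = false by lia.
by rewrite addKn.
Qed.

Section Fld.
Variable F : finFieldType.
Local Open Scope ring_scope.

Definition fdec (x : nat) : F := odflt 0 (omap enum_val (insub x : option 'I_#|F|)).
Definition fenc (y : F) : nat := val (enum_rank y).

Lemma fencK y : fdec (fenc y) = y.
Proof. by rewrite /fdec /fenc valK /= enum_rankK. Qed.

Lemma fenc_lt y : (fenc y < #|F|)%N.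
Proof. exact: ltn_ord. Qed.

Lemma fdec_inj x y : (x < #|F|)%N -> (y < #|F|)%N -> fdec x = fdec y -> x = y.
Proof.
move=> hx hy; rewrite /fdec.
case: insubP => [i _ ei|]; last by rewrite hx.
case: insubP => [j _ ej|]; last by rewrite hy.
by move=> /= /enum_val_inj eij; rewrite -ei -ej eij.
Qed.

Lemma prod_XsubC_perm (s t : seq F) :
  \prod_(x <- s) ('X - x%:P) = \prod_(x <- t) ('X - x%:P) -> perm_eq s t.
Proof.
elim: s t => [|x s IH] t.
  rewrite big_nil => h; have := congr1 (fun p : {poly F} => size p) h; rewrite /= size_prod_XsubC size_poly1.
  by case: t {h}.
rewrite big_cons => h.
have xt : x \in t by rewrite -root_prod_XsubC -h rootM root_XsubC eqxx.
have pt := perm_to_rem xt.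
rewrite (perm_big _ pt) big_cons /= in h.
have := mulfI _ h; rewrite polyXsubC_eq0 => /(_ isT) /IH hp.
apply: (@perm_trans _ (x :: rem x t)); last by rewrite perm_sym. by rewrite perm_cons.
Qed.

Lemma card_roots (p : {poly F}) : p != 0 -> (#|[set x | root p x]| < size p)%N.
Proof.
move=> p0; rewrite cardE; apply: max_poly_roots => //.
  by apply/allP => x; rewrite mem_enum inE.
exact: enum_uniq.
Qed.

End Fld.

Lemma perm_map_inj_in (T1 T2 : eqType) (f : T1 -> T2) (D : pred T1) (s t : seq T1) :
  {in D &, injective f} -> all D s -> all D t ->
  perm_eq (map f s) (map f t) -> perm_eq s t.
Proof.
move=> fi ds dt h; apply/allP => x _ /=; apply/eqP.
have [xD|xD] := boolP (x \in D); last first.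
  have -> : count_mem x s = 0%N.
    by apply/count_memPn; apply: contra xD => xs; exact: (allP ds).
  apply/esym/count_memPn.
  by apply: contra xD => xs; exact: (allP dt).
have e r : all D r -> count_mem x r = count_mem (f x) (map f r).
  move=> dr; rewrite count_map; apply: eq_in_count => y yr /=.
  apply/eqP/eqP => [->//|]; move=> /esym /fi -> //; exact: (allP dr).
by rewrite (e _ ds) (e _ dt); exact: (permP h).
Qed.

Lemma card_coord (aT T : finType) (u : aT) (S : pred T) :
  #|[pred r : {ffun aT -> T} | r u \in S]| * #|T| = #|S| * #|{: {ffun aT -> T}}|.
Proof.
pose Fm := fun x : aT => if x == u then S else (predT : pred T).
have -> : #|[pred r : {ffun aT -> T} | r u \in S]| = #|family Fm|.
  apply: eq_card => r; rewrite !inE; apply/idP/familyP => [h x|h].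
    by rewrite /Fm; case: eqP => [->|]//.
  by have := h u; rewrite /Fm eqxx.
rewrite card_family card_ffun.
have E s (g : aT -> nat) : foldr muln 1 [seq g x | x <- s] = \prod_(x <- s) g x.
  by elim: s => [|a s IH]; rewrite ?big_nil ?big_cons //= IH.
rewrite E big_enum /= (bigD1 u) //= /Fm eqxx.
rewrite -prod_nat_const [in RHS](bigD1 u) //=.
rewrite (eq_bigr (fun _ => #|T|)); first by rewrite mulnAC mulnA.
by move=> x xu; rewrite (negbTE xu); apply: eq_card.
Qed.

Section Tree.
Variables (T : finType) (adjf : T -> seq T) (rho : T).
Let e : rel T := fun u v => v \in adjf u.
Hypothesis sym : forall u v, (v \in adjf u) = (u \in adjf v).
Hypothesis conn : forall u v, connect e u v.

Definition reach (u : T) (k : nat) : bool :=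
  [exists p : k.-tuple T, path e rho p && (last rho p == u)].

Lemma reachP u k : reflect (exists p, [/\ size p = k, path e rho p & last rho p = u]) (reach u k).
Proof.
apply: (iffP existsP) => [[t /andP[h1 /eqP h2]]|[p [sp h1 h2]]].
  by exists (val t); rewrite size_tuple.
have sp' : size p == k by apply/eqP.
by exists (Tuple sp'); rewrite /= h1 h2 eqxx.
Qed.

Definition dist (u : T) : nat := find (reach u) (iota 0 #|T|).

Lemma reach_small u : exists2 k, k < #|T| & reach u k.
Proof.
have /connectP[p pp lp] := conn rho u.
rewrite lp; case: (shortenP pp) => p' pp' up' _.
exists (size p'); last by apply/reachP; exists p'.
move/card_uniqP: up' => h.
by rewrite -ltnS -[(size p').+1]/(size (rho :: p')) -h ltnS max_card.
Qed.

Lemma dist_lt u : dist u < #|T|.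
Proof.
have [k kT rk] := reach_small u.
rewrite /dist -[X in _ < X](size_iota 0) -has_find; apply/hasP; exists k => //.
by rewrite mem_iota.
Qed.

Lemma dist_reach u : reach u (dist u).
Proof.
have := nth_find 0 (_ : has (reach u) (iota 0 #|T|)).
rewrite nth_iota ?add0n; last exact: dist_lt.
apply; have := dist_lt u; rewrite /dist -[X in _ < X](size_iota 0) -has_find //.
Qed.

Lemma dist_min u k : reach u k -> dist u <= k.
Proof.
move=> rk; rewrite leqNgt; apply/negP => kd.
have := before_find 0 kd; rewrite nth_iota; last by have := dist_lt u; lia.
by rewrite add0n rk.
Qed.

Lemma dist_rho : dist rho = 0.
Proof. by apply/eqP; rewrite -leqn0 dist_min //; apply/reachP; exists [::]. Qed.

Lemma dist0 u : dist u = 0 -> u = rho.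
Proof.
move=> h; have /reachP[[|x p] [sp _ lp]] := dist_reach u; first by rewrite -lp.
by rewrite h in sp.
Qed.

Lemma dist_edge u v : v \in adjf u -> dist v <= (dist u).+1.
Proof.
move=> uv; apply: dist_min; have /reachP[p [sp pp lp]] := dist_reach u.
apply/reachP; exists (rcons p v); rewrite size_rcons sp last_rcons rcons_path pp lp.
by split.
Qed.

Lemma dist_pred u : u != rho -> exists2 v, v \in adjf u & dist v = (dist u).-1.
Proof.
move=> ur; have /reachP[p [sp pp lp]] := dist_reach u.
case/lastP: p sp pp lp => [|p x]; first by move=> _ _ /= h; rewrite h eqxx in ur.
rewrite size_rcons rcons_path last_rcons => sp /andP[pp ex] xu; subst u.
exists (last rho p); first by rewrite sym.
apply/eqP; rewrite eqn_leq; apply/andP; split.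
  by rewrite -sp /=; apply: dist_min; apply/reachP; exists p.
have := dist_edge (_ : x \in adjf (last rho p)) ; rewrite -sp /=.
by move=> /(_ ex); lia.
Qed.

Definition par (u : T) : T :=
  if u == rho then rho else odflt rho [pick v | (v \in adjf u) && (dist v == (dist u).-1)].

Lemma par_rho : par rho = rho.
Proof. by rewrite /par eqxx. Qed.

Lemma par_spec u : u != rho -> [/\ par u \in adjf u, dist (par u) = (dist u).-1 & 0 < dist u].
Proof.
move=> ur; rewrite /par (negbTE ur).
case: pickP => [v /andP[h1 /eqP h2]|h]; last first.
  by have [v h1 h2] := dist_pred ur; have := h v; rewrite h1 h2 eqxx.
split=> //; rewrite lt0n; apply/eqP => /dist0 h0; by rewrite h0 eqxx in ur.
Qed.

Lemma dist_par u : dist (par u) = (dist u).-1.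
Proof. by have [->|/par_spec[]//] := eqVneq u rho; rewrite par_rho dist_rho. Qed.

Lemma dist_iter k u : dist (iter k par u) = dist u - k.
Proof. by elim: k => [|k IH]; rewrite ?subn0 //= dist_par IH; lia. Qed.

Definition desc (u : T) : {set T} :=
  [set w | (dist u <= dist w) && (iter (dist w - dist u) par w == u)].

Lemma desc_rho : desc rho = setT.
Proof.
apply/setP => w; rewrite !inE dist_rho leq0n subn0 /=.
by apply/eqP/dist0; rewrite dist_iter subnn.
Qed.

Lemma desc_self u : u \in desc u.
Proof. by rewrite inE leqnn subnn eqxx. Qed.

Lemma child_dist v : v != rho -> dist v = (dist (par v)).+1.
Proof. by move=> /par_spec[_ -> h]; lia. Qed.

Lemma desc_child u v w : v != rho -> par v = u ->
  (w \in desc v) = [&& w \in desc u, w != u & iter (dist w - dist u).-1 par w == v].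
Proof.
move=> vr pv; have dv := child_dist vr; rewrite pv in dv.
rewrite !inE; apply/idP/idP.
  case/andP => h1 /eqP h2.
  have -> : dist w - dist u = (dist w - dist v).+1 by lia.
  rewrite iterS h2 pv eqxx.
  rewrite eqxx andbT andbT; apply/andP; split; first lia.
  by apply/eqP => wu; move: h1; rewrite wu dv ltnn.
case/and3P => /andP[h1 /eqP h2] wu /eqP h3.
have ne : dist w != dist u by apply: contra wu => /eqP h; rewrite -h subnn /= in h2; rewrite h2.
have -> : dist w - dist v = (dist w - dist u).-1 by lia.
by rewrite h3 eqxx andbT dv; lia.
Qed.

Lemma child_in u w : w \in desc u -> w != u ->
  let v := iter (dist w - dist u).-1 par w in [/\ v != rho, par v = u & v \in adjf u].
Proof.
rewrite inE => /andP[h1 /eqP h2] wu v.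
have ne : dist w != dist u by apply: contra wu => /eqP h; rewrite -h subnn /= in h2; rewrite h2.
have pv : par v = u.
  by rewrite /v -iterS; have -> : (dist w - dist u).-1.+1 = dist w - dist u by lia.
have vr : v != rho.
  apply/eqP => vr; have := dist_iter (dist w - dist u).-1 w; rewrite -/v vr dist_rho; lia.
by split=> //; have [h _ _] := par_spec vr; rewrite sym -pv.
Qed.

Local Open Scope ring_scope.
Import GRing.Theory.
Variable R : comNzRingType.
Variable g : T -> R.
Definition subprod (u : T) : R := \prod_(w in desc u) g w.

Lemma subprod_rec u (U : uniq (adjf u)) :
  subprod u = g u * \prod_(v <- adjf u | (v != rho) && (par v == u)) subprod v.
Proof.
rewrite /subprod (bigD1 u) ?desc_self //=; congr (_ * _).
rewrite (partition_big (fun w => iter (dist w - dist u).-1 par w)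
   (fun v => [&& v \in adjf u, v != rho & par v == u])); last first.
  by move=> w /andP[wd wu]; have [h1 h2 h3] := child_in wd wu; rewrite h1 h2 h3 eqxx.
rewrite -[in RHS]big_filter big_uniq ?filter_uniq //=.
apply: eq_big => [v|v]; first by rewrite mem_filter andbC.
case/and3P => vu vr /eqP pv; rewrite /subprod; apply: eq_bigl => w.
by rewrite (desc_child w vr pv) -andbA.
Qed.

Lemma subprod_rho : subprod rho = \prod_w g w.
Proof. by rewrite /subprod desc_rho; apply: eq_bigl => w; rewrite inE. Qed.
End Tree.
Import GRing.Theory.

Lemma expn_mono m n e : (m <= n)%N -> (m ^ e <= n ^ e)%N.
Proof. by move=> h; elim: e => // e IH; rewrite !expnS leq_mul. Qed.

Section Main.
Variables c idc : nat.

Definition kk n := ((c + 3) * up_log 2 n + 2)%N.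
Definition BB n := ((c + 3 + idc) * up_log 2 n + 2)%N.
Lemma kk_gt0 n : (0 < kk n)%N. Proof. rewrite /kk; lia. Qed.
Lemma prime2 : prime 2. Proof. by []. Qed.
Definition FF n : finFieldType := s2val (pPrimePowerField prime2 (kk_gt0 n)).
Lemma card_FF n : #|FF n| = (2 ^ kk n)%N.
Proof. exact: (s2valP' (pPrimePowerField prime2 (kk_gt0 n))). Qed.

Lemma kk_BB n : (kk n <= BB n)%N. Proof. rewrite /kk /BB; nia. Qed.

Lemma n_up n : (n <= 2 ^ up_log 2 n)%N. Proof. exact: up_logP. Qed.

Lemma n3_kk n : (3 * n ^ 3 < 2 ^ kk n)%N.
Proof.
rewrite /kk expnD [((c + 3) * _)%N]mulnC expnM; set q := (2 ^ up_log 2 n)%N.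
have hq : (n <= q)%N := n_up n.
have q1 : (1 <= q)%N by rewrite expn_gt0.
have : (n ^ 3 <= q ^ (c + 3))%N.
  apply: leq_trans (expn_mono 3 hq) _.
  by apply: leq_pexp2l => //; lia.
rewrite (_ : 2 ^ 2 = 4)%N //.
have : (1 <= q ^ (c+3))%N by rewrite expn_gt0 q1.
lia.
Qed.

Lemma n_BB n : (n < 2 ^ BB n)%N.
Proof.
apply: leq_ltn_trans (n_up n) _; rewrite ltn_exp2l //; rewrite /BB; nia.
Qed.

Lemma id_BB n x : (x < n ^ idc)%N -> (x < 2 ^ BB n)%N.
Proof.
move=> h; apply: leq_trans h _; apply: leq_trans (expn_mono idc (n_up n)) _.
rewrite -expnM leq_exp2l //; rewrite /BB; nia.
Qed.

Lemma c_kk n : (2 ^ (c * up_log 2 n) <= 2 ^ kk n)%N.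
Proof. rewrite leq_exp2l // /kk; nia. Qed.

Lemma psize_log : is_O_log (fun n => 5 * BB n)%N.
Proof.
exists (10 * (c + 4 + idc))%N, 2%N => n n2.
have t1 : (1 <= trunc_log 2 n)%N by rewrite trunc_log_gt0.
have : (up_log 2 n <= 2 * trunc_log 2 n)%N.
  apply: up_log_min => //; apply: ltnW; apply: leq_trans (@trunc_log_ltn 2 n isT) _.
  by rewrite leq_exp2l //; lia.
rewrite /BB; nia.
Qed.

Local Open Scope ring_scope.

Definition cd n (s : seq bool) : FF n := fdec (FF n) (bits2nat s).

Definition gval n (x : SE_input) (z : FF n) : FF n :=
  \prod_(a <- x.1) (z - cd n a) * (\prod_(b <- x.2) (z - cd n b))^-1.

Definition fZ n m := getf (BB n) 0 m.
Definition fP n m := getf (BB n) 1 m.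
Definition fQ n m := getf (BB n) 2 m.
Definition fD n m := getf (BB n) 3 m.
Definition fS n m : FF n := fdec (FF n) (getf (BB n) 4 m).

Definition dec (n id : nat) (x : SE_input) (ns : seq nat) (t m : seq bool)
    (ms : seq (seq bool)) : bool :=
  [&& all (fun m' => fZ n m' == fZ n m) ms,
      if fP n m == 0%N then (fZ n m == bits2nat t) && (fS n m == 1)
      else has (fun p => (p.1 == fQ n m) && (fD n p.2 < fD n m)%N) (zip ns ms),
      fS n m != 0 &
      fS n m == gval x (fdec (FF n) (fZ n m)) *
        \prod_(p <- zip ns ms | (fP n p.2 != 0%N) && (fQ n p.2 == id)) fS n p.2].

Definition Prot : dAM_protocol SE_input := DAMProtocol kk (fun n => 5 * BB n)%N dec.

End Main.
Import GRing.Theory.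

Lemma union_bound (I T : finType) (p : I -> pred T) :
  (#|[pred r | [exists u, p u r]]| <= \sum_u #|[pred r | p u r]|)%N.
Proof.
have E (q : pred T) : #|[pred r | q r]| = \sum_r (q r : nat).
  by rewrite -sum1_card big_mkcond /=; apply: eq_bigr => r _; rewrite inE; case: (q r).
rewrite E (eq_bigr (fun u => \sum_r (p u r : nat))); last by move=> u _; rewrite E.
rewrite exchange_big /=; apply: leq_sum => r _.
case: existsP => [[u pu]|]//=.
by rewrite (bigD1 u) //= pu.
Qed.

Section Gen.
Local Open Scope ring_scope.
Lemma big_seq_fin (R : comNzRingType) (I : finType) (s : seq I) (P : pred I) (F : I -> R) :
  uniq s -> \prod_(i <- s | P i) F i = \prod_(i | (i \in s) && P i) F i.
Proof.
move=> us; rewrite -big_filter big_uniq ?filter_uniq //; apply: eq_bigl => i.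
by rewrite mem_filter andbC.
Qed.
End Gen.

Section Sound.
Variables (c idc n : nat) (G : instance SE_input n).
Hypothesis wfG : wf_instance idc G.
Local Notation F := (FF c n).
Local Notation P := (Prot c idc).
Local Open Scope ring_scope.

Lemma acceptE (r : coin_space P n) (m : 'I_n -> seq bool) u :
  node_accepts G r m u =
  dec c idc n (ident G u) (inp G u) [seq ident G v | v <- adj G u] (val (r u)) (m u)
      [seq m v | v <- adj G u].
Proof. by []. Qed.

Definition Al := flatten [seq (inp G u).1 | u <- enum 'I_n].
Definition Bl := flatten [seq (inp G u).2 | u <- enum 'I_n].
Definition PA : {poly F} := \prod_(a <- Al) ('X - (cd c n a)%:P).
Definition PB : {poly F} := \prod_(a <- Bl) ('X - (cd c n a)%:P).

Lemma prod_all (z : F) :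
  \prod_u gval (inp G u) z = PA.[z] * (PB.[z])^-1.
Proof.
rewrite big_split /= prodfV /PA /PB !horner_prod /Al /Bl !big_flatten !big_map -!enumT !big_enum /=.
congr (_ * _^-1); apply: eq_bigr => u _; apply: eq_bigr => a _; by rewrite hornerXsubC.
Qed.

Lemma key (u0 : 'I_n) (M : prover P n) (r : coin_space P n) :
  all_accept G M r -> exists u, root (PA - PB) (fdec F (bits2nat (val (r u)))).
Proof.
move=> /forallP acc; set m := M r.
have [U Sy Cn Ij] : [/\ forall u, uniq (adj G u), forall u v, (v \in adj G u) = (u \in adj G v),
   forall u v, connect (edge G) u v & injective (ident G)].
  by case: wfG => h1 h2 h3 h4 _; split=> // u; case: (h1 u).
have acc' u : dec c idc n (ident G u) (inp G u) [seq ident G v | v <- adj G u] (val (r u)) (m u)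
      [seq m v | v <- adj G u] := acc u.
rewrite /dec in acc'.
have Zadj u v : v \in adj G u -> fZ c idc n (m v) = fZ c idc n (m u).
  move=> vu; case/and4P: (acc' u) => /allP h _ _ _.
  by apply/eqP; apply: h; apply: map_f.
have Zall u v : fZ c idc n (m u) = fZ c idc n (m v).
  have /connectP[p pp ->] := Cn u v.
  elim: p u pp => [|w p IH] u //= /andP[uw pp].
  by rewrite -(IH _ pp) (Zadj u w).
case: (@arg_minnP _ u0 xpredT (fun u => fD c idc n (m u)) isT) => u _ umin.
have Pu : fP c idc n (m u) = 0%N.
  case/and4P: (acc' u) => _ + _ _; case: eqP => // _.
  rewrite zip_map => /hasP[[i mv]] /mapP[v vu [-> ->]] /= /andP[_ lt].
  by have := umin v isT; rewrite leqNgt lt.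
have [Zu Su] : fZ c idc n (m u) = bits2nat (val (r u)) /\ fS c idc n (m u) = 1.
  by case/and4P: (acc' u) => _ + _ _; rewrite Pu eqxx => /andP[/eqP -> /eqP ->].
exists u.
set z := fdec F (bits2nat (val (r u))).
have Sne w : fS c idc n (m w) != 0 by case/and4P: (acc' w).
have Srec w : fS c idc n (m w) = gval (inp G w) z *
    \prod_(v <- adj G w | (fP c idc n (m v) != 0%N) && (fQ c idc n (m v) == ident G w))
       fS c idc n (m v).
  by case/and4P: (acc' w) => _ _ _ /eqP ->; rewrite zip_map big_map /= (Zall w u) Zu.
have par v : fP c idc n (m v) != 0%N ->
    exists2 pv, v \in adj G pv & ident G pv = fQ c idc n (m v).
  move=> Pv; case/and4P: (acc' v) => _ + _ _; rewrite (negbTE Pv) zip_map.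
  case/hasP=> [[i mv]] /mapP[w wv [-> ->]] /= /andP[/eqP <- _].
  by exists w; rewrite // Sy.
pose X := \prod_w fS c idc n (m w).
have X0 : X != 0 by apply/prodf_neq0 => w _; exact: Sne.
have : X = \prod_w gval (inp G w) z * X.
  rewrite {1}/X (eq_bigr _ (fun w _ => Srec w)) big_split /=; congr (_ * _).
  rewrite (eq_bigr (fun w => \prod_(v | (v \in adj G w) && ((fP c idc n (m v) != 0%N) &&
       (fQ c idc n (m v) == ident G w))) fS c idc n (m v))); last first.
    by move=> w _; rewrite big_seq_fin.
  rewrite (exchange_big_dep xpredT) //= /X; apply: eq_bigr => v _.
  case: (boolP (fP c idc n (m v) == 0%N)) => Pv.
    rewrite big_pred0; last by move=> w /=; rewrite andbF.
    by case/and4P: (acc' v) => _ + _ _; rewrite Pv => /andP[_ /eqP ->].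
  have [pv vpv ipv] := par v Pv.
  apply: (big_pred1 pv) => w /=; rewrite -ipv.
  apply/idP/eqP => [/andP[_ /eqP /Ij]//|->]; by rewrite vpv eqxx.
rewrite -{1}[X]mul1r => /(mulIf X0) /esym; rewrite prod_all => h1.
have PB0 : PB.[z] != 0.
  apply/negP => /eqP PB0; move: h1; rewrite PB0 invr0 mulr0 => /eqP; by rewrite eq_sym oner_eq0.
by rewrite rootE hornerD hornerN subr_eq0 -(divfK PB0 PA.[z]) h1 mul1r.
Qed.


Lemma sumn_bound (I : Type) (s : seq I) (f : I -> nat) k :
  (forall x, f x <= k)%N -> (sumn (map f s) <= size s * k)%N.
Proof. move=> h; elim: s => //= x s IH; rewrite mulSn leq_add //. Qed.

Hypothesis wfS : wf_SE c G.

Definition mlen := (c * up_log 2 n)%N.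

Lemma sizes s : (s \in Al) || (s \in Bl) -> size s = mlen.
Proof.
case: wfS => l [ln h] /orP[] /flattenP[x /mapP[u _ ->] xs].
  by case: (h u) => _ _ /allP /(_ s); rewrite mem_cat xs => /(_ isT) /eqP.
by case: (h u) => _ _ /allP /(_ s); rewrite mem_cat xs orbT => /(_ isT) /eqP.
Qed.

Lemma cd_inj s t : size s = mlen -> size t = mlen -> cd c n s = cd c n t -> s = t.
Proof.
move=> hs ht; rewrite /cd => /fdec_inj h; apply: bits2nat_inj; first by rewrite hs ht.
have lt x : size x = mlen -> (bits2nat x < #|F|)%N.
  move=> hx; rewrite card_FF; apply: leq_trans (bits2nat_lt x) _; rewrite hx; exact: c_kk.
exact: h (lt _ hs) (lt _ ht).
Qed.

Lemma size_Al : (size Al <= n * n)%N /\ (size Bl <= n * n)%N.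
Proof.
case: wfS => l [ln h]; rewrite /Al /Bl !size_flatten /shape -!map_comp.
have E1 : forall u, (size (inp G u).1 <= n)%N by move=> u; case: (h u) => -> _ _.
have E2 : forall u, (size (inp G u).2 <= n)%N by move=> u; case: (h u) => _ -> _.
by split; [apply: leq_trans (sumn_bound _ E1) _|apply: leq_trans (sumn_bound _ E2) _];
  rewrite -enumT size_enum_ord.
Qed.

Lemma f_neq0 : ~ SetEquality G -> PA - PB != 0.
Proof.
move=> nse; rewrite subr_eq0; apply/eqP => h; apply: nse.
rewrite /PA /PB -(big_map (cd c n) xpredT (fun x => 'X - x%:P))
   -(big_map (cd c n) xpredT (fun x => 'X - x%:P)) in h.
have := prod_XsubC_perm h.
apply: (perm_map_inj_in (D := fun s => size s == mlen)).
- by move=> x y /eqP hx /eqP hy; apply: cd_inj.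
- by apply/allP => x xa; rewrite sizes ?xa.
- by apply/allP => x xa; rewrite sizes ?xa ?orbT.
Qed.

Definition zc (t : (kk c n).-tuple bool) : F := fdec F (bits2nat (val t)).

Lemma zc_inj : injective zc.
Proof.
move=> t1 t2; rewrite /zc => /fdec_inj h; apply: val_inj; apply: bits2nat_inj.
  by rewrite !size_tuple.
by apply: h; rewrite card_FF; apply: leq_trans (bits2nat_lt _) _; rewrite size_tuple.
Qed.

Lemma soundness : ~ SetEquality G -> forall M : prover P n, prover_ok M ->
  (3 * n_accept G M < #|{: coin_space P n}|)%N.
Proof.
move=> nse M _.
have n0 : (0 < n)%N.
  rewrite lt0n; apply/eqP => n0; apply: nse.
  have e : enum 'I_n = [::] by apply: size0nil; rewrite size_enum_ord.
  by rewrite /SetEquality e.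
pose u0 := Ordinal n0.
pose RS := [set x | root (PA - PB) x].
have hRS : (#|RS| <= n * n)%N.
  rewrite -ltnS; apply: leq_trans (card_roots (f_neq0 nse)) _.
  apply: leq_trans (size_polyD _ _) _; rewrite size_polyN /PA /PB !size_prod_XsubC.
  by case: size_Al => h1 h2; rewrite geq_max !ltnS h1 h2.
pose S := [set t | zc t \in RS].
have hS : (#|S| <= n * n)%N.
  rewrite -(card_imset _ zc_inj); apply: leq_trans hRS; apply: subset_leq_card.
  by apply/subsetP => x /imsetP[t]; rewrite inE => ht ->.
have cT : #|{: (kk c n).-tuple bool}| = (2 ^ kk c n)%N by rewrite card_tuple card_bool.
have h1 : (n_accept G M <= \sum_u #|[pred r : coin_space P n | r u \in S]|)%N.
  apply: leq_trans (union_bound _) ; apply: subset_leq_card; apply/subsetP => r.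
  rewrite !inE => /(key u0)[u hu]; apply/existsP; exists u; by rewrite !inE /zc.
have h2 : ((\sum_u #|[pred r : coin_space P n | r u \in S]|) * 2 ^ kk c n
           = n * #|S| * #|{: coin_space P n}|)%N.
  rewrite big_distrl /= (eq_bigr (fun _ => #|S| * #|{: coin_space P n}|)%N).
    by rewrite sum_nat_const card_ord mulnA.
  move=> u _; rewrite -cT; exact: card_coord.
have hsp : (0 < #|{: coin_space P n}|)%N by rewrite card_ffun cT expn_gt0 expn_gt0.
have h3 := n3_kk c n.
rewrite -(ltn_pmul2r (expn_gt0 2 (kk c n) : (0 < 2 ^ kk c n)%N)).
have : (n_accept G M * 2 ^ kk c n <= n * (n * n) * #|{: coin_space P n}|)%N.
  apply: leq_trans (leq_mul h1 (leqnn _)) _; rewrite h2 leq_mul2r leq_mul2l hS !orbT //.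
move: h3 hsp; set K := (2 ^ kk c n)%N; set A := n_accept G M; set Sp := #|_|.
move=> h3 hsp h4.
have : (3 * (n * (n * n)) * Sp < K * Sp)%N by rewrite ltn_pmul2r // -(expn1 n) -expnSr.
rewrite mulnAC. nia.
Qed.
End Sound.
Import GRing.Theory.

Section Compl.
Variables (c idc n : nat) (G : instance SE_input n).
Hypothesis wfG : wf_instance idc G.
Hypothesis wfS : wf_SE c G.
Hypothesis se : SetEquality G.
Local Notation F := (FF c n).
Local Notation P := (Prot c idc).
Local Open Scope ring_scope.

Variable rho : 'I_n.

Let U : forall u, uniq (adj G u). Proof. by case: wfG => h1 _ _ _ _ u; case: (h1 u). Qed.
Let Sy : forall u v, (v \in adj G u) = (u \in adj G v). Proof. by case: wfG. Qed.
Let Cn : forall u v, connect (fun u v => v \in adj G u) u v. Proof. by case: wfG. Qed.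
Let Ij : injective (ident G). Proof. by case: wfG. Qed.
Let Idb : forall u, (ident G u < n ^ idc)%N. Proof. by case: wfG. Qed.

Definition ZZ (r : coin_space P n) : nat := bits2nat (val (r rho)).
Definition zz (r : coin_space P n) : F := fdec F (ZZ r).
Definition gg (r : coin_space P n) (w : 'I_n) : F := gval (inp G w) (zz r).
Definition pr (r : coin_space P n) (u : 'I_n) : seq nat :=
  [:: ZZ r; nat_of_bool (u != rho); ident G (par (adj G) rho u); dist (adj G) rho u;
      fenc (subprod (adj G) rho (gg r) u)].
Definition Mh : prover P n := fun r u => enc (BB c idc n) (pr r u).

Lemma Mh_ok : prover_ok Mh.
Proof. by move=> r u; rewrite /Mh size_enc. Qed.

Lemma pr_small r u : all (fun x => x < 2 ^ BB c idc n)%N (pr r u).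
Proof.
have kB : (2 ^ kk c n <= 2 ^ BB c idc n)%N by rewrite leq_exp2l // kk_BB.
rewrite /pr /= !andbT; apply/and5P; split.
- apply: leq_trans (bits2nat_lt _) _; by rewrite size_tuple.
- apply: leq_trans (n_BB c idc n); case: (u != rho) => /=; last by [].
  by case: u => [[|k] /=]; lia.
- exact: id_BB.
- apply: ltn_trans (n_BB c idc n); have := dist_lt rho Cn u; by rewrite card_ord.
- by apply: leq_trans kB; rewrite -card_FF; apply: fenc_lt.
Qed.

Lemma fields r u :
  [/\ fZ c idc n (Mh r u) = ZZ r, fP c idc n (Mh r u) = nat_of_bool (u != rho),
      fQ c idc n (Mh r u) = ident G (par (adj G) rho u),
      fD c idc n (Mh r u) = dist (adj G) rho u &
      fS c idc n (Mh r u) = subprod (adj G) rho (gg r) u].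
Proof.
rewrite /fZ /fP /fQ /fD /fS /Mh !getf_enc ?pr_small //=.
by rewrite fencK.
Qed.


Lemma PAB : PA c G = PB c G.
Proof. by rewrite /PA /PB (perm_big _ se). Qed.

Lemma all_good r : ~~ root (PA c G) (zz r) -> all_accept G Mh r.
Proof.
rewrite /root => PAz.
have nzA a : a \in Al G -> zz r - cd c n a != 0.
  move=> aA; move: PAz; rewrite /PA horner_prod prodf_seq_neq0 => /allP /(_ a aA).
  by rewrite hornerXsubC.
have nzB a : a \in Bl G -> zz r - cd c n a != 0.
  move=> aA; move: PAz; rewrite PAB /PB horner_prod prodf_seq_neq0 => /allP /(_ a aA).
  by rewrite hornerXsubC.
have gne w : gg r w != 0.
  rewrite /gg /gval mulf_neq0 // ?invr_eq0 prodf_seq_neq0; apply/allP => a ain /=.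
    by apply: nzA; apply/flattenP; exists (inp G w).1 => //; apply: map_f; rewrite mem_enum.
  by apply: nzB; apply/flattenP; exists (inp G w).2 => //; apply: map_f; rewrite mem_enum.
apply/forallP => u; rewrite acceptE /dec zip_map.
have [-> -> -> -> ->] := fields r u.
apply/and4P; split.
- apply/allP => x /mapP[v _ ->]; by have [-> _ _ _ _] := fields r v.
- case: (eqVneq u rho) => [->|ur] /=.
    rewrite eqxx /ZZ /= (subprod_rho rho Sy Cn) prod_all -PAB mulfV //.
  apply/hasP; have [h1 h2 h3] := par_spec Sy Cn ur.
  exists (ident G (par (adj G) rho u), Mh r (par (adj G) rho u)); first by apply: map_f.
  by have [_ _ _ -> _] := fields r (par (adj G) rho u); rewrite /= eqxx h2 /=; lia.
- by rewrite /subprod; apply/prodf_neq0 => w _.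
- rewrite big_map /= (subprod_rec rho Sy Cn) //; apply/eqP; congr (_ * _).
  apply: eq_big => [v|v _]; have [_ hP hQ _ hS] := fields r v; last by rewrite hS.
  by rewrite hP hQ; case: (v != rho) => //=; rewrite (inj_eq Ij).
Qed.

Lemma completeness_pos :
  (2 * #|{: coin_space P n}| < 3 * n_accept G Mh)%N.
Proof.
pose RA := [set x | root (PA c G) x].
have PA0 : PA c G != 0 by rewrite /PA monic_neq0 // monic_prod_XsubC.
have hRA : (#|RA| <= n * n)%N.
  rewrite -ltnS; apply: leq_trans (card_roots PA0) _.
  by rewrite /PA size_prod_XsubC ltnS; case: (size_Al wfS).
pose S := [set t | zc t \in RA].
have hS : (#|S| <= n * n)%N.
  rewrite -(card_imset _ (@zc_inj c n)); apply: leq_trans hRA; apply: subset_leq_card.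
  by apply/subsetP => x /imsetP[t]; rewrite inE => ht ->.
have cT : #|{: (kk c n).-tuple bool}| = (2 ^ kk c n)%N by rewrite card_tuple card_bool.
pose bad := #|[pred r : coin_space P n | r rho \in S]|.
have hb : (bad * 2 ^ kk c n = #|S| * #|{: coin_space P n}|)%N.
  by rewrite -cT; apply: card_coord.
have hgood : (#|{: coin_space P n}| - bad <= n_accept G Mh)%N.
  have e := cardC [pred r : coin_space P n | r rho \in S].
  have -> : (#|{: coin_space P n}| - bad = #|[predC [pred r : coin_space P n | r rho \in S]]|)%N.
    by rewrite -e /bad addKn.
  apply: subset_leq_card; apply/subsetP => r; rewrite !inE => h.
  apply: all_good; apply: contra h => h; exact: h.
have n0 : (0 < n)%N by case: rho => k; lia.
have h3 := n3_kk c n.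
have hsp : (0 < #|{: coin_space P n}|)%N by rewrite card_ffun cT expn_gt0 expn_gt0.
have hbad : (3 * bad < #|{: coin_space P n}|)%N.
  rewrite -(ltn_pmul2r (expn_gt0 2 (kk c n) : (0 < 2 ^ kk c n)%N)) -mulnA hb.
  move: h3 hsp hS; set K := (2 ^ kk c n)%N; set Sp := #|{: coin_space P n}|; set s := #|S|.
  move=> h3 hsp hS.
  have e3 : (n ^ 3 = n * (n * n))%N by rewrite !expnS expn0 muln1.
  have : (3 * (n * (n * n)) * Sp < K * Sp)%N by rewrite ltn_pmul2r // -e3.
  have : (s <= n * (n * n))%N by apply: leq_trans hS _; rewrite leq_pmull.
  nia.
lia.
Qed.
End Compl.

Theorem mainTheorem5 (c idc : nat) : in_dAM_log idc (wf_SE c) SetEquality.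
Proof.
exists (Prot c idc); split; last exact: psize_log.
split.
- move=> n /=; apply: leq_trans (kk_BB c idc n) _; lia.
- move=> n G [wfG wfS] se; case: (posnP n) => [n0|n0].
    pose M0 : prover (Prot c idc) n := fun _ _ => [::].
    exists M0; split; first by [].
    have -> : n_accept G M0 = #|{: coin_space (Prot c idc) n}|.
      rewrite /n_accept; apply: eq_card => r; rewrite !inE; apply/forallP => u; exfalso.
      by have := ltn_ord u; move: (nat_of_ord u) => k; lia.
    have : (0 < #|{: coin_space (Prot c idc) n}|)%N.
      by rewrite card_ffun card_tuple card_bool !expn_gt0.
    lia.
  exists (Mh G (Ordinal n0)); split; [exact: Mh_ok | exact: completeness_pos].
- by move=> n G [wfG wfS] nse M Mok; exact: soundness.
Qed.
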